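(* Let $S_1 = A_3^*$ be the set of nonnegative integers whose base-$3$ expansion contains no digit $2$, and for $n\ge 2$ let $S_n$ be the set of positive integers $k$ such that $v_p(k)\in S_{n-1}$ for each prime $p\mid k$. Then for each $n$, $S_n$ has lower uniform density $0$.
   Context: The lower uniform density of $A\subseteq\mathbb{N}$ is $\underline{u}(A) = \lim_{s\to\infty} \min_{n\ge 0} \frac{1}{s}\,\#\{a\in A : n < a \le n+s\}$. *)

(* Defs.v *)
From HB Require Import structures.
From mathcomp Require Import all_boot all_order all_algebra.
From mathcomp Require Import all_classical all_reals all_analysis.
Set Implicit Arguments. Unset Strict Implicit. Unset Printing Implicit Defensive.
Import Order.TTheory GRing.Theory Num.Theory.

(* base-3 digits of k (least significant first); fuel k suffices since k %/ 3 < k *)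
Fixpoint digits3_aux (fuel k : nat) : seq nat :=
  match fuel with
  | 0 => [::]
  | f.+1 => if k == 0 then [::] else (k %% 3) :: digits3_aux f (k %/ 3)
  end.
Definition digits3 (k : nat) : seq nat := digits3_aux k k.

Definition A3star (k : nat) : bool := 2 \notin digits3 k.

(* Saux m = S_{m+1} *)
Fixpoint Saux (m : nat) : pred nat :=
  match m with
  | 0 => A3star
  | m'.+1 => fun k => (0 < k) && all (fun p => Saux m' (logn p k)) (primes k)
  end.

(* S n for n >= 1 *)
Definition S (n : nat) : pred nat := Saux n.-1.

Definition window_count (A : pred nat) (n s : nat) : nat := count A (iota n.+1 s).

Lemma min_count_ex (A : pred nat) (s : nat) :
  exists m, `[< exists n, window_count A n s = m >].
Proof. by exists (window_count A 0 s); apply/asboolP; exists 0. Qed.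

Definition min_count (A : pred nat) (s : nat) : nat := ex_minn (min_count_ex A s).

(* the sequence whose limit (s -> oo) is the lower uniform density *)
Definition lud_seq (R : realType) (A : pred nat) (s : nat) : R :=
  (min_count A s)%:R / s%:R.

(* Main.v *)
Require Import Defs.
From HB Require Import structures.
From mathcomp Require Import all_boot all_order all_algebra.
From mathcomp Require Import all_classical all_reals all_analysis.
Import Order.TTheory GRing.Theory Num.Theory.
Import numFieldNormedType.Exports.
From mathcomp Require Import zify.
From Stdlib Require Import Lia.

Lemma digits_top2 m : forall f k, (2 * 3 ^ m <= k < 3 ^ m.+1)%N -> (k <= f)%N ->
  2 \in digits3_aux f k.
Proof.
elim: m => [|m IH] f k.
  rewrite expn0 expn1 muln1 => /andP[h1 h2].
  have -> : k = 2 by apply/eqP; rewrite eqn_leq h1 -ltnS h2.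
  by case: f => [|f] // _; rewrite /= inE.
move=> /andP[h1 h2] hf.
case: f hf => [|f] hf.
  by move: h1; rewrite leqn0 in hf; rewrite (eqP hf) leqn0 muln_eq0 expn_eq0.
have k0 : k != 0.
  by apply/eqP=> k0; move: h1; rewrite k0 leqn0 muln_eq0 expn_eq0.
rewrite /= (negbTE k0) inE; apply/orP; right; apply: IH.
  apply/andP; split.
    by rewrite leq_divRL // -mulnA -expnSr.
  by rewrite ltn_divLR // -expnSr.
rewrite -ltnS; apply: leq_trans hf.
by rewrite ltn_Pdiv // lt0n.
Qed.

Lemma window1 s : exists n0, window_count (S 1) n0 s = 0.
Proof.
exists (2 * 3 ^ s).-1; apply/eqP; rewrite -leqn0 leqNgt -has_count.
apply/hasPn => k; rewrite mem_iota => /andP[h1 h2].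
have p3 : (0 < 2 * 3 ^ s)%N by rewrite muln_gt0 expn_gt0.
rewrite prednK // in h1 h2.
rewrite /S /= /A3star negbK; apply: (digits_top2 s) (leqnn _).
have : (s < 3 ^ s)%N by rewrite ltn_expl.
rewrite expnS; lia.
Qed.

Fixpoint bad (m : nat) : nat := if m is m'.+1 then 2 ^ bad m' else 2.

Lemma bad_gt0 m : (0 < bad m)%N.
Proof. by case: m => //= m; rewrite expn_gt0. Qed.

Lemma bad_notin m : ~~ Saux m (bad m).
Proof.
elim: m => [|m IH] //=.
rewrite expn_gt0 /=; apply/allPn; exists 2.
  by rewrite mem_primes /= expn_gt0 /= dvdn_exp // bad_gt0.
by rewrite pfactorK.
Qed.

Fixpoint pr (i : nat) : nat :=
  if i is i'.+1 then sval (prime_above (pr i')) else 2.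

Lemma pr_prime i : prime (pr i).
Proof. by case: i => //= i; case: prime_above. Qed.

Lemma pr_lt i : (pr i < pr i.+1)%N.
Proof. by rewrite /=; case: prime_above. Qed.

Lemma pr_mono i j : (i < j)%N -> (pr i < pr j)%N.
Proof.
elim: j => // j IH; rewrite ltnS leq_eqVlt => /orP[/eqP->|h].
  exact: pr_lt.
exact: ltn_trans (IH h) (pr_lt _).
Qed.

Lemma pr_coprime i j e : i != j -> coprime (pr i ^ e) (pr j ^ e).
Proof.
move=> ij; apply: coprimeXl; apply: coprimeXr.
rewrite prime_coprime ?pr_prime // dvdn_prime2 ?pr_prime //.
case: (ltngtP i j) ij => // h _.
  by rewrite neq_ltn (pr_mono _ _ h).
by rewrite neq_ltn (pr_mono _ _ h) orbT.
Qed.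

Lemma crt e s : exists x M,
  (forall i, (i < s)%N -> pr i ^ e.+1 %| M /\ (x + i.+1) %% pr i ^ e.+1 = pr i ^ e)
  /\ (forall j, (s <= j)%N -> coprime M (pr j ^ e.+1)).
Proof.
elim: s => [|s [x [M [H1 H2]]]].
  by exists 0, 1; split => // j _; rewrite coprime1n.
set q := pr s ^ e.+1.
have q0 : (0 < q)%N by rewrite expn_gt0 prime_gt0 // pr_prime.
set t := q * s.+1 - s.+1 + pr s ^ e.
have ht : (t + s.+1) %% q = pr s ^ e.
  have : (s.+1 <= q * s.+1)%N by rewrite leq_pmull.
  move=> hh; rewrite /t addnAC subnK // [q * _]mulnC modnMDl modn_small //.
  by rewrite /q ltn_exp2l ?prime_gt1 ?pr_prime.
have cMq : coprime M q by apply: H2.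
exists (chinese M q x t), (M * q); split.
  move=> i; rewrite ltnS leq_eqVlt => /orP[/eqP->|hi].
    split; first by apply: dvdn_mull.
    by rewrite -modnDml chinese_modr // modnDml.
  have [d1 d2] := H1 i hi; split; first exact: dvdn_mulr.
  have e1 : chinese M q x t = x %[mod pr i ^ e.+1].
    by rewrite -(modn_dvdm _ d1) chinese_modl // modn_dvdm.
  by rewrite -d2 -modnDml e1 modnDml.
move=> j hj; rewrite coprimeMl H2 ?(ltnW hj) //=.
by apply: pr_coprime; rewrite neq_ltn hj.
Qed.

Lemma window2 m s : exists n0, window_count (S m.+2) n0 s = 0.
Proof.
have [x [M [H1 _]]] := crt (bad m) s.
exists x; apply/eqP; rewrite -leqn0 leqNgt -has_count.
apply/hasPn => k; rewrite mem_iota => /andP[h1 h2].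
have -> : k = x + (k - x.+1).+1 by lia.
have hi : (k - x.+1 < s)%N by lia.
move: (k - x.+1) hi => i hi.
have [_ hm] := H1 i hi.
set y := x + i.+1 in hm *.
have p := pr_prime i.
have y0 : (0 < y)%N by rewrite /y addnS.
have hA : pr i ^ bad m %| y.
  by rewrite (divn_eq y (pr i ^ (bad m).+1)) hm dvdn_add // dvdn_mull // dvdn_exp2l.
have hB : ~~ (pr i ^ (bad m).+1 %| y).
  rewrite /dvdn hm; apply/negP=> /eqP h.
  have : (0 < pr i ^ bad m)%N by rewrite expn_gt0 prime_gt0.
  by rewrite h.
have hlog : logn (pr i) y = bad m.
  rewrite !pfactor_dvdn // in hA hB; lia.
rewrite /S /=; apply/negP=> /andP[_ /allP hall].
have hd : pr i ^ bad m %| y by rewrite pfactor_dvdn // hlog.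
have: pr i \in primes y.
  rewrite mem_primes p y0 /=; apply: dvdn_trans hd.
  by rewrite dvdn_exp ?bad_gt0.
move/hall; rewrite hlog; exact/negP/bad_notin.
Qed.

Lemma window n s : (1 <= n)%N -> exists n0, window_count (S n) n0 s = 0.
Proof.
case: n => [|[|m]] // _; [exact: window1 | exact: window2].
Qed.

Lemma min_count0 n s : (1 <= n)%N -> min_count (S n) s = 0.
Proof.
move=> hn; have [n0 h] := @window n s hn.
rewrite /min_count; case: ex_minnP => k _ /(_ 0) hk.
apply/eqP; rewrite -leqn0; apply: hk; apply/asboolP; by exists n0.
Qed.

Local Open Scope classical_set_scope.
Local Open Scope ring_scope.

Theorem mainTheorem9 (R : realType) (n : nat) :
  (1 <= n)%N -> lud_seq R (S n) @ \oo --> (0 : R).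
Proof.
move=> hn.
have -> : lud_seq R (S n) = fun _ => 0.
  by apply: funext => s; rewrite /lud_seq min_count0 // mul0r.
exact: cvg_cst.
Qed.
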